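(* Fix $\varepsilon\in(0,1/2)$ and, for each integer $K\ge 2$, let $c=c(K)$ and $r=r(K)$ be positive integers satisfying \[ \left|\frac{c(K)}{K}-\left(1-\sqrt{1-2\varepsilon}\right)\right|<K^{-1/4},\qquad \left|\frac{r(K)}{K}-\left(1-\sqrt{1-2\varepsilon}\right)\right|<K^{-1/4}. \] Then \[ \lim_{K\to\infty}\left(1+\sum_{\ell=0}^{2K-2}\frac{K-c}{(\ell+1)K-h(\ell+1)}\prod_{t=1}^{\ell}\frac{K-r\,\mathbf 1_{\{t\text{ odd}\}}-c\,\mathbf 1_{\{t\text{ even}\}}-\lfloor t/2\rfloor}{tK-h(t)}\right)=\exp\left\{\sqrt{1-2\varepsilon}\right\}, \] where the empty product (for $\ell=0$) equals $1$.
   Context: For a positive integer $t$, $h(t)=\sum_{i=1}^{t}\lfloor i/2\rfloor$. *)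

(* Defs.v *)
From Stdlib Require Import Reals Lra Lia Arith.
Open Scope R_scope.

Fixpoint h (t : nat) : nat :=
  match t with
  | O => O
  | S t' => (h t' + Nat.div (S t') 2)%nat
  end.

Fixpoint prod1 (f : nat -> R) (l : nat) : R :=
  match l with
  | O => 1
  | S l' => prod1 f l' * f (S l')
  end.

Definition ind_odd (t : nat) : R := if Nat.odd t then 1 else 0.
Definition ind_even (t : nat) : R := if Nat.even t then 1 else 0.

Definition fac (K c r t : nat) : R :=
  (INR K - INR r * ind_odd t - INR c * ind_even t - INR (Nat.div t 2))
  / (INR t * INR K - INR (h t)).

Definition expr (K c r : nat) : R :=
  1 + sum_f_R0 (fun l =>
        (INR K - INR c) / (INR (l + 1) * INR K - INR (h (l + 1)))
        * prod1 (fac K c r) l) (2 * K - 2).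

(* Main.v *)
Require Import Defs.
From Stdlib Require Import Reals.
From Stdlib Require Import Lra Lia.
From Coquelicot Require Coquelicot.
Open Scope R_scope.

Module Aux.
Import Coquelicot.Coquelicot.

Lemma div2_spec (t : nat) : (t = 2 * (t / 2) + t mod 2 /\ t mod 2 < 2)%nat.
Proof. split; [apply Nat.div_mod | apply Nat.mod_upper_bound]; lia. Qed.

Lemma h_inv (t : nat) : (4 * h t + t mod 2 = t * t)%nat.
Proof.
  induction t as [|t IH]; [reflexivity|].
  change (h (S t)) with (h t + S t / 2)%nat. destruct (div2_spec t) as [A1 A2]. destruct (div2_spec (S t)) as [B1 B2].
  set (q := (t / 2)%nat) in *. set (m := (t mod 2)%nat) in *. set (q2 := (S t / 2)%nat) in *. set (m2 := (S t mod 2)%nat) in *.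
  clearbody q m q2 m2.
  assert ((m = 0 /\ q2 = q /\ m2 = 1) \/ (m = 1 /\ q2 = S q /\ m2 = 0))%nat as [[-> [-> ->]]|[-> [-> ->]]] by lia;
  subst t; nia.
Qed.

Lemma h_bound (t K : nat) : (t <= 2 * K)%nat -> (2 * h t <= t * K)%nat.
Proof. intros H. pose proof (h_inv t). nia. Qed.

Lemma Kpow_small d : 0 < d -> exists N, forall K, (N <= K)%nat -> Rpower (INR K) (-(1/4)) < d.
Proof.
  intros Hd. destruct (INR_unbounded (exp (-4 * ln d))) as [N HN].
  exists N. intros K HK. apply le_INR in HK.
  unfold Rpower. rewrite <- (exp_ln d) by assumption. apply exp_increasing.
  assert (ln (exp (-4 * ln d)) < ln (INR K)).
  { apply ln_increasing; [apply exp_pos | lra]. }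
  rewrite ln_exp in H. lra.
Qed.

Lemma ratio_lim (x : nat -> nat) al :
  (forall K, (2 <= K)%nat -> Rabs (INR (x K) / INR K - al) < Rpower (INR K) (-(1/4))) ->
  is_lim_seq (fun K => INR (x K) / INR K) al.
Proof.
  intros H. apply is_lim_seq_Reals. intros d Hd.
  destruct (Kpow_small d Hd) as [N HN]. exists (max N 2). intros n Hn.
  unfold R_dist. eapply Rlt_trans; [apply H; lia | apply HN; lia].
Qed.

Lemma inv_lim : is_lim_seq (fun K => / INR K) 0.
Proof.
  assert (H := is_lim_seq_inv _ _ is_lim_seq_INR). simpl in H. apply H. discriminate.
Qed.

Lemma const_over m : is_lim_seq (fun K => m / INR K) 0.
Proof.
  assert (H := is_lim_seq_mult' _ _ _ _ (is_lim_seq_const m) inv_lim).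
  rewrite Rmult_0_r in H. exact H.
Qed.

Lemma G (t n : nat) (x : nat -> R) be : (1 <= t)%nat ->
  is_lim_seq (fun K => x K / INR K) (1 - be) ->
  is_lim_seq (fun K => (INR K - x K) / (INR t * INR K - INR n)) (be / INR t).
Proof.
  intros Ht Hx.
  apply is_lim_seq_ext_loc with (u := fun K => (1 - x K / INR K) / (INR t - INR n / INR K)).
  - exists (S n). intros K HK.
    assert (HK' : INR n < INR K) by (apply lt_INR; lia).
    assert (Ht' : 1 <= INR t) by (apply (le_INR 1); lia).
    assert (0 <= INR n) by apply pos_INR.
    assert (INR t * INR K - INR n > 0) by nra.
assert (INR K <> 0) by lra. field. split; lra.
  - assert (E : (1 - (1 - be)) / (INR t - 0) = be / INR t).
    { assert (1 <= INR t) by (apply (le_INR 1); lia). field. lra. }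
    rewrite <- E. apply is_lim_seq_div'.
    + apply is_lim_seq_minus'; [apply is_lim_seq_const | exact Hx].
    + apply is_lim_seq_minus'; [apply is_lim_seq_const | apply const_over].
    + assert (1 <= INR t) by (apply (le_INR 1); lia). lra.
Qed.

Definition T (K c r l : nat) : R :=
  (INR K - INR c) / (INR (l + 1) * INR K - INR (h (l + 1))) * prod1 (fac K c r) l.

Lemma expr_T K c r : Defs.expr K c r = 1 + sum_f_R0 (T K c r) (2 * K - 2).
Proof. reflexivity. Qed.

Lemma odd_even t : ind_odd t + ind_even t = 1.
Proof. unfold ind_odd, ind_even. rewrite <- Nat.negb_odd. destruct (Nat.odd t); simpl; lra. Qed.

Lemma fac_lim (x y : nat -> nat) be t : (1 <= t)%nat ->
  is_lim_seq (fun K => INR (x K) / INR K) (1 - be) ->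
  is_lim_seq (fun K => INR (y K) / INR K) (1 - be) ->
  is_lim_seq (fun K => fac K (x K) (y K) t) (be / INR t).
Proof.
  intros Ht Hx Hy.
  apply is_lim_seq_ext with
    (u := fun K => (INR K - (INR (y K) * ind_odd t + INR (x K) * ind_even t + INR (t / 2)))
                   / (INR t * INR K - INR (h t))).
  { intros K. unfold fac. f_equal. ring. }
  apply G; [exact Ht|].
  apply is_lim_seq_ext with
    (u := fun K => (INR (y K) / INR K) * ind_odd t + (INR (x K) / INR K) * ind_even t + INR (t / 2) / INR K).
  { intros K. unfold Rdiv. ring. }
  assert (E : (1 - be) * ind_odd t + (1 - be) * ind_even t + 0 = 1 - be).
  { pose proof (odd_even t). nra. }
  rewrite <- E.
  apply is_lim_seq_plus'; [apply is_lim_seq_plus'|apply const_over];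
  apply is_lim_seq_mult'; try apply is_lim_seq_const; assumption.
Qed.

Lemma prod_lim (x y : nat -> nat) be l :
  is_lim_seq (fun K => INR (x K) / INR K) (1 - be) ->
  is_lim_seq (fun K => INR (y K) / INR K) (1 - be) ->
  is_lim_seq (fun K => prod1 (fac K (x K) (y K)) l) (prod1 (fun t => be / INR t) l).
Proof.
  intros Hx Hy. induction l as [|l IH]; simpl.
  - apply is_lim_seq_const.
  - apply is_lim_seq_mult'; [exact IH|]. apply fac_lim; auto. lia.
Qed.

Lemma prod_id be l : prod1 (fun t => be / INR t) l = be ^ l / INR (Factorial.fact l).
Proof.
  induction l as [|l IH]; cbn [prod1].
  - simpl. lra.
  - rewrite IH, fact_simpl, mult_INR. pose proof (INR_fact_neq_0 l).
    assert (0 < INR (S l)) by (apply lt_0_INR; lia). simpl pow. field. lra.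
Qed.

Definition Tl (be : R) (l : nat) : R := / INR (Factorial.fact (S l)) * be ^ (S l).

Lemma T_lim (x y : nat -> nat) be l :
  is_lim_seq (fun K => INR (x K) / INR K) (1 - be) ->
  is_lim_seq (fun K => INR (y K) / INR K) (1 - be) ->
  is_lim_seq (fun K => T K (x K) (y K) l) (Tl be l).
Proof.
  intros Hx Hy.
  assert (E : be / INR (l + 1) * prod1 (fun t => be / INR t) l = Tl be l).
  { rewrite prod_id. unfold Tl. rewrite fact_simpl, mult_INR.
    replace (l + 1)%nat with (S l) by lia. pose proof (INR_fact_neq_0 l).
    assert (0 < INR (S l)) by (apply lt_0_INR; lia). simpl pow. field. lra. }
  rewrite <- E. unfold T. apply is_lim_seq_mult'.
  - apply G; [lia|exact Hx].
  - apply prod_lim; assumption.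
Qed.

Lemma sum_lim (x y : nat -> nat) be N :
  is_lim_seq (fun K => INR (x K) / INR K) (1 - be) ->
  is_lim_seq (fun K => INR (y K) / INR K) (1 - be) ->
  is_lim_seq (fun K => sum_f_R0 (T K (x K) (y K)) N) (sum_f_R0 (Tl be) N).
Proof.
  intros Hx Hy. induction N as [|N IH]; simpl.
  - apply T_lim; assumption.
  - apply is_lim_seq_plus'; [exact IH|]. apply T_lim; assumption.
Qed.

Lemma sum_Tl be n : sum_f_R0 (Tl be) n = E1 be (S n) - 1.
Proof.
  induction n as [|n IH]; unfold E1 in *; cbn [sum_f_R0].
  - unfold Tl. simpl. field.
  - rewrite IH. unfold Tl. cbn [sum_f_R0]. ring.
Qed.

Lemma B0 K t Nm : (1 <= K)%nat -> (1 <= t)%nat -> (t <= 2 * K)%nat -> Rabs Nm <= INR K ->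
  Rabs (Nm / (INR t * INR K - INR (h t))) <= 2 / INR t.
Proof.
  intros HK Ht HtK HN.
  assert (Hh : 2 * INR (h t) <= INR t * INR K).
  { rewrite <- mult_INR. replace 2 with (INR 2) by reflexivity. rewrite <- mult_INR.
    apply le_INR. apply h_bound. exact HtK. }
  assert (Kp : 1 <= INR K) by (apply (le_INR 1); lia).
  assert (tp : 1 <= INR t) by (apply (le_INR 1); lia).
  assert (Dp : INR t * INR K / 2 <= INR t * INR K - INR (h t)) by lra.
  assert (tKp : 0 < INR t * INR K / 2) by nra.
  rewrite Rabs_div by lra. rewrite (Rabs_pos_eq (_ - _)) by lra.
  apply Rle_trans with (INR K / (INR t * INR K / 2)).
  - unfold Rdiv. apply Rmult_le_compat; try lra.
    + apply Rabs_pos.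
    + left. apply Rinv_0_lt_compat. lra.
    + apply Rinv_le_contravar; lra.
  - right. field. lra.
Qed.

Lemma fac_bound K c r t : (1 <= K)%nat -> (c <= K)%nat -> (r <= K)%nat ->
  (1 <= t)%nat -> (t <= 2 * K)%nat -> Rabs (fac K c r t) <= 2 / INR t.
Proof.
  intros HK Hc Hr Ht HtK. unfold fac. apply B0; try assumption.
  assert (INR c <= INR K) by (apply le_INR; lia).
  assert (INR r <= INR K) by (apply le_INR; lia).
  assert (INR (t / 2) <= INR K).
  { apply le_INR. destruct (div2_spec t). set (q := (t / 2)%nat) in *. set (m := (t mod 2)%nat) in *. clearbody q m. lia. }
  pose proof (pos_INR c). pose proof (pos_INR r). pose proof (pos_INR (t/2)).
  apply Rabs_le. unfold ind_odd, ind_even. rewrite <- Nat.negb_odd.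
  destruct (Nat.odd t); cbn [negb]; lra.
Qed.

Lemma prod_bound K c r l : (1 <= K)%nat -> (c <= K)%nat -> (r <= K)%nat ->
  (l <= 2 * K)%nat -> Rabs (prod1 (fac K c r) l) <= 2 ^ l / INR (Factorial.fact l).
Proof.
  intros HK Hc Hr. induction l as [|l IH]; intros Hl; cbn [prod1].
  - rewrite Rabs_R1. simpl. lra.
  - rewrite Rabs_mult. apply Rle_trans with (2 ^ l / INR (Factorial.fact l) * (2 / INR (S l))).
    + apply Rmult_le_compat; try apply Rabs_pos.
      * apply IH. lia.
      * apply fac_bound; lia.
    + right. rewrite fact_simpl, mult_INR. pose proof (INR_fact_neq_0 l).
      assert (0 < INR (S l)) by (apply lt_0_INR; lia). simpl pow. field. lra.
Qed.

Lemma T_bound K c r l : (1 <= K)%nat -> (c <= K)%nat -> (r <= K)%nat ->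
  (S l <= 2 * K)%nat -> Rabs (T K c r l) <= Tl 2 l.
Proof.
  intros HK Hc Hr Hl. unfold T. rewrite Rabs_mult.
  apply Rle_trans with (2 / INR (S l) * (2 ^ l / INR (Factorial.fact l))).
  - apply Rmult_le_compat; try apply Rabs_pos.
    + replace (l + 1)%nat with (S l) by lia. apply B0; try lia.
      assert (INR c <= INR K) by (apply le_INR; lia). pose proof (pos_INR c).
      apply Rabs_le. lra.
    + apply prod_bound; lia.
  - right. unfold Tl. rewrite fact_simpl, mult_INR. pose proof (INR_fact_neq_0 l).
    assert (0 < INR (S l)) by (apply lt_0_INR; lia). simpl pow. field. lra.
Qed.

Lemma E1_growing x : 0 <= x -> Un_growing (E1 x).
Proof.
  intros Hx n. unfold E1. cbn [sum_f_R0].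
  assert (0 <= / INR (Factorial.fact (S n)) * x ^ S n).
  { apply Rmult_le_pos; [left; apply Rinv_0_lt_compat, INR_fact_lt_0 | apply pow_le; lra]. }
  lra.
Qed.

Lemma eventually_le (x : nat -> nat) be : 0 < be ->
  is_lim_seq (fun K => INR (x K) / INR K) (1 - be) ->
  exists N, forall K, (N <= K)%nat -> (x K <= K)%nat.
Proof.
  intros Hb Hl. apply is_lim_seq_Reals in Hl. destruct (Hl be Hb) as [N HN].
  exists (max N 1). intros K HK. specialize (HN K ltac:(lia)). unfold R_dist in HN.
  apply Rabs_def2 in HN. destruct HN as [H1 H2].
  assert (0 < INR K) by (apply lt_0_INR; lia).
  assert (INR (x K) < INR K).
  { assert (INR (x K) / INR K < 1) by lra.
    apply Rmult_lt_compat_r with (r := INR K) in H0; [|lra].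
    unfold Rdiv in H0. rewrite Rmult_assoc, Rinv_l, Rmult_1_r, Rmult_1_l in H0 by lra. exact H0. }
  apply INR_lt in H0. lia.
Qed.

Theorem main (eps : R) (c r : nat -> nat)
  (Heps : 0 < eps < 1 / 2)
  (Hc : forall K : nat, (2 <= K)%nat ->
     (0 < c K)%nat /\
     Rabs (INR (c K) / INR K - (1 - sqrt (1 - 2 * eps))) < Rpower (INR K) (- (1 / 4)))
  (Hr : forall K : nat, (2 <= K)%nat ->
     (0 < r K)%nat /\
     Rabs (INR (r K) / INR K - (1 - sqrt (1 - 2 * eps))) < Rpower (INR K) (- (1 / 4))) :
  Un_cv (fun K : nat => Defs.expr K (c K) (r K)) (exp (sqrt (1 - 2 * eps))).
Proof.
  set (s := sqrt (1 - 2 * eps)) in *.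
  assert (Hs : 0 < s) by (apply sqrt_lt_R0; lra).
  assert (Hcl : is_lim_seq (fun K => INR (c K) / INR K) (1 - s))
    by (apply ratio_lim; intros; apply Hc; assumption).
  assert (Hrl : is_lim_seq (fun K => INR (r K) / INR K) (1 - s))
    by (apply ratio_lim; intros; apply Hr; assumption).
  intros d Hd.
  assert (Hd3 : d / 3 > 0) by lra.
  destruct (E1_cvg s (d/3) Hd3) as [Ns HNs].
  destruct (E1_cvg 2 (d/3) Hd3) as [N2 HN2].
  set (N := max Ns N2).
  pose proof (sum_lim c r s N Hcl Hrl) as HS. apply is_lim_seq_Reals in HS.
  destruct (HS (d/3) Hd3) as [K1 HK1].
  destruct (eventually_le c s Hs Hcl) as [Kc HKc].
  destruct (eventually_le r s Hs Hrl) as [Kr HKr].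
  exists (max (max K1 (max Kc Kr)) (N + 3)).
  intros K HK. unfold R_dist. rewrite expr_T.
  rewrite (tech2 _ N (2 * K - 2)) by lia.
  set (M := (2 * K - 2 - S N)%nat).
  set (tail := sum_f_R0 (fun i => T K (c K) (r K) (S N + i)) M).
  assert (F1 := HK1 K ltac:(lia)). unfold R_dist in F1.
  assert (F2 := HNs (S N) ltac:(lia)). unfold R_dist in F2.
  rewrite sum_Tl in F1.
  assert (F3 : Rabs tail <= sum_f_R0 (fun i => Tl 2 (S N + i)) M).
  { eapply Rle_trans; [apply Rsum_abs|]. apply sum_Rle. intros i Hi.
    apply T_bound; [lia | apply HKc; lia | apply HKr; lia | lia]. }
  assert (F4 : sum_f_R0 (fun i => Tl 2 (S N + i)) M = E1 2 (S (2 * K - 2)) - E1 2 (S N)).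
  { pose proof (tech2 (Tl 2) N (2 * K - 2) ltac:(lia)) as E.
    rewrite !sum_Tl in E. fold M in E. lra. }
  assert (F5 : E1 2 (S (2 * K - 2)) <= exp 2).
  { apply growing_ineq; [apply E1_growing; lra | apply E1_cvg]. }
  assert (F6 := HN2 (S N) ltac:(lia)). unfold R_dist in F6.
  apply Rabs_def2 in F1. apply Rabs_def2 in F2. apply Rabs_def2 in F6.
  pose proof (Rle_abs tail). pose proof (Rle_abs (- tail)). rewrite Rabs_Ropp in H0.
  apply Rabs_def1; lra.
Qed.
End Aux.

Theorem lemma7p2 (eps : R) (c r : nat -> nat)
  (Heps : 0 < eps < 1 / 2)
  (Hc : forall K : nat, (2 <= K)%nat ->
     (0 < c K)%nat /\
     Rabs (INR (c K) / INR K - (1 - sqrt (1 - 2 * eps))) < Rpower (INR K) (- (1 / 4)))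
  (Hr : forall K : nat, (2 <= K)%nat ->
     (0 < r K)%nat /\
     Rabs (INR (r K) / INR K - (1 - sqrt (1 - 2 * eps))) < Rpower (INR K) (- (1 / 4))) :
  Un_cv (fun K : nat => expr K (c K) (r K)) (exp (sqrt (1 - 2 * eps))).
Proof.
  exact (Aux.main eps c r Heps Hc Hr).
Qed.
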